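(* If $X$ is a locally finite simplicial set, then the ring $\mathbb Z^{(X)}$ is $s$-unital: for every finite family $\phi_1,\dots,\phi_n\in\mathbb Z^{(X)}$ there exists $\mu\in\mathbb Z^{(X)}$ with $\phi_i\mu=\mu\phi_i=\phi_i$ for all $i$.
   Context: $\mathbb Z^{\Delta^n}=\mathbb Z[t_0,\dots,t_n]/(t_0+\dots+t_n-1)$ forms a simplicial ring; $\mathbb Z^X=\hom_{\mathrm{sSet}}(X,\mathbb Z^{\Delta^\bullet})$ with pointwise multiplication; the support of $\phi$ is the simplicial subset generated by the simplices on which $\phi$ is nonzero; $\mathbb Z^{(X)}$ is the ideal of elements with finite support. $X$ is locally finite if every simplex is a face of only finitely many nondegenerate simplices (i.e. for each $\sigma$, finitely many nondegenerate $\tau$ with $\langle\tau\rangle\supset\langle\sigma\rangle$). *)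

(* Defs.v *)
From HB Require Import structures.
From mathcomp Require Import all_boot all_order all_algebra.
From Stdlib Require Import List.
Set Implicit Arguments. Unset Strict Implicit. Unset Printing Implicit Defensive.
Import Order.TTheory GRing.Theory Num.Theory.
Local Open Scope ring_scope.

(** * Integer polynomials in [n] variables t_0, ..., t_(n-1), as iterated
    univariate polynomials: mpoly n.+1 = (mpoly n)[t_n]. *)
Fixpoint mpoly (n : nat) : comNzRingType :=
  match n with
  | 0 => int
  | k.+1 => {poly mpoly k} : comNzRingType
  end.

(** the variable t_i in mpoly n (garbage 0 if i >= n) *)
Fixpoint mvar (n : nat) (i : nat) : mpoly n :=
  match n return mpoly n with
  | 0 => 0
  | k.+1 => if i == k then ('X : {poly mpoly k}) else ((mvar k i)%:P : {poly mpoly k})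
  end.

Fixpoint meval (S : comNzRingType) (v : nat -> S) (n : nat) : mpoly n -> S :=
  match n return mpoly n -> S with
  | 0 => fun p => (p : int)%:~R
  | k.+1 => fun p =>
      \sum_(j < size (p : {poly mpoly k})) meval v (p : {poly mpoly k})`_j * v k ^+ j
  end.

(** * The simplicial ring Z^{Delta^n} = Z[t_0,...,t_n]/(t_0+...+t_n - 1).
    Elements are represented by polynomials in mpoly n.+1; [eqD n p q]
    is equality in the quotient ring. *)
Definition eqD (n : nat) (p q : mpoly n.+1) : Prop :=
  exists r : mpoly n.+1, p - q = (\sum_(i < n.+1) mvar n.+1 i - 1) * r.

Definition pullD (m n : nat) (f : 'I_m.+1 -> 'I_n.+1) (p : mpoly n.+1) : mpoly m.+1 :=
  meval (fun j : nat => \sum_(i < m.+1 | (f i : nat) == j) mvar m.+1 i) p.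

(** * Simplicial sets, as contravariant functors on the simplex category.
    A morphism [m] -> [n] of Delta is a monotone map 'I_m.+1 -> 'I_n.+1. *)
Definition monotone (m n : nat) (f : 'I_m -> 'I_n) : Prop :=
  forall i j : 'I_m, (i <= j)%N -> (f i <= f j)%N.

Record sSet := SSet {
  sob :> nat -> Type;
  sact : forall m n : nat, ('I_m.+1 -> 'I_n.+1) -> sob n -> sob m;
  sact_id : forall n (x : sob n), sact (fun i => i) x = x;
  sact_comp : forall m n k (f : 'I_m.+1 -> 'I_n.+1) (g : 'I_n.+1 -> 'I_k.+1)
      (x : sob k), monotone f -> monotone g ->
      sact f (sact g x) = sact (fun i => g (f i)) x
}.

(** the simplex [y] is a face (iterated, possibly degenerate) of [x],
    i.e. y lies in the simplicial subset generated by x *)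
Definition is_face (X : sSet) (m n : nat) (y : X m) (x : X n) : Prop :=
  exists f : 'I_m.+1 -> 'I_n.+1, monotone f /\ y = sact f x.

(** degenerate: image of a simplex of lower dimension under a structure map
    (equivalently, in the image of some degeneracy s_i) *)
Definition degenerate (X : sSet) (n : nat) (x : X n) : Prop :=
  exists (k : nat) (y : X k) (g : 'I_n.+1 -> 'I_k.+1),
    (k < n)%N /\ monotone g /\ x = sact g y.

Definition nondegenerate (X : sSet) (n : nat) (x : X n) : Prop :=
  ~ degenerate x.

Definition locally_finite (X : sSet) : Prop :=
  forall (m : nat) (s : X m), exists L : list {n : nat & X n},
    forall (n : nat) (t : X n), nondegenerate t -> is_face s t ->
      In (existT (fun k => X k) n t) L.

(** * Z^X = hom_sSet(X, Z^{Delta^.}), represented by families of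
    representatives, compatible with the simplicial structure
    (up to equality in the quotient rings). *)
Record ZX (X : sSet) := MkZX {
  zfam :> forall n : nat, X n -> mpoly n.+1;
  zcompat : forall m n (f : 'I_m.+1 -> 'I_n.+1) (x : X n), monotone f ->
      eqD (zfam (sact f x)) (pullD f (zfam x))
}.

Definition in_support (X : sSet) (phi : ZX X) (m : nat) (z : X m) : Prop :=
  exists (n : nat) (x : X n), ~ eqD (phi n x) 0 /\ is_face z x.

(** phi lies in Z^(X): its support is finite, i.e. has finitely many
    nondegenerate simplices *)
Definition finite_support (X : sSet) (phi : ZX X) : Prop :=
  exists L : list {n : nat & X n},
    forall (m : nat) (z : X m), nondegenerate z -> in_support phi z ->
      In (existT (fun k => X k) m z) L.

(* Main.v *)
Require Import Defs.
From HB Require Import structures.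
From mathcomp Require Import all_boot all_order all_algebra.
From Stdlib Require Import List.
Import GRing.Theory.
Local Open Scope ring_scope.

Section Meval.
Variable S : comNzRingType.
Variable v : nat -> S.

Lemma meval0 k : meval v (0 : mpoly k) = 0.
Proof. case: k => [|k] /=; first by []. by rewrite size_poly0 big_ord0. Qed.

Lemma meval_widen k (p : mpoly k.+1) N : (size (p : {poly mpoly k}) <= N)%N ->
  meval v p = \sum_(j < N) meval v (p : {poly mpoly k})`_j * v k ^+ j.
Proof.
move=> hN /=. rewrite (big_ord_widen N (fun j => meval v (p : {poly mpoly k})`_j * v k ^+ j)) //.
rewrite big_mkcond /=; apply: eq_bigr => i _.
case: ifP => // /negbT; rewrite -leqNgt => hi.
by rewrite seq.nth_default // meval0 mul0r.
Qed.

Lemma mevalD k (p q : mpoly k) : meval v (p + q) = meval v p + meval v q.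
Proof.
elim: k p q => [|k IH] p q; first by rewrite /= intrD.
set N := maxn (size (p : {poly mpoly k})) (size (q : {poly mpoly k})).
rewrite (@meval_widen k (p + q) N); last by apply: size_polyD.
rewrite (@meval_widen k p N) ?leq_maxl // (@meval_widen k q N) ?leq_maxr //.
rewrite -big_split /=; apply: eq_bigr => i _.
by rewrite coefD IH mulrDl.
Qed.

Lemma mevalC k (c : mpoly k) : meval v ((c%:P : {poly mpoly k}) : mpoly k.+1) = meval v c.
Proof.
rewrite (@meval_widen k _ 1); last by rewrite size_polyC leq_b1.
by rewrite big_ord1 coefC /= expr0 mulr1.
Qed.

Lemma meval1 k : meval v (1 : mpoly k) = 1.
Proof. elim: k => [|k IH]; first by rewrite /= . by rewrite -polyC1 mevalC IH. Qed.

Lemma mevalX k i : (i < k)%N -> meval v (mvar k i) = v i.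
Proof.
elim: k => [|k IH] //= hi.
case: eqP => [->|ne].
  rewrite -/(meval v (n:=k.+1) _). 
  rewrite (@meval_widen k _ 2); last by rewrite size_polyX.
  by rewrite big_ord_recr big_ord1 /= coefX coefX /= meval0 meval1 mul0r add0r expr1 mul1r.
rewrite -/(meval v (n:=k.+1) _) mevalC IH //.
by move: hi; rewrite ltnS leq_eqVlt => /orP [/eqP|] //.
Qed.

Lemma meval_sum k (I : finType) (P : pred I) (F : I -> mpoly k) :
  meval v (\sum_(i | P i) F i) = \sum_(i | P i) meval v (F i).
Proof. by apply: (big_morph _ (@mevalD k) (meval0 k)). Qed.
End Meval.
From Stdlib Require Import ClassicalEpsilon Classical FunctionalExtensionality.

Definition pb (P : Prop) : bool := if excluded_middle_informative P then true else false.
Lemma pbP (P : Prop) : pb P = true <-> P.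
Proof. rewrite /pb; case: excluded_middle_informative => //. Qed.

Definition vert (X : sSet) n (j : 'I_n.+1) (x : X n) : X 0 := sact (fun _ : 'I_1 => j) x.
Arguments vert {X n} j x.

Lemma mono_const m n (j : 'I_n) : monotone (fun _ : 'I_m => j).
Proof. by move=> ???. Qed.

Lemma vert_sact (X : sSet) m n (f : 'I_m.+1 -> 'I_n.+1) (x : X n) j :
  monotone f -> vert j (sact f x) = vert (f j) x.
Proof. move=> hf; by rewrite /vert sact_comp //; apply: mono_const. Qed.

Section Mu.
Variable X : sSet.
Variable Q : X 0 -> Prop.
Definition mufam {n} (x : X n) : mpoly n.+1 :=
  \sum_(j < n.+1 | pb (Q (vert j x))) mvar n.+1 j.

Lemma mu_compat m n (f : 'I_m.+1 -> 'I_n.+1) (x : X n) : monotone f ->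
  eqD (mufam (sact f x)) (pullD f (mufam x)).
Proof.
move=> hf; exists 0; rewrite mulr0; apply/eqP; rewrite subr_eq0; apply/eqP.
rewrite /pullD /mufam meval_sum.
under [RHS]eq_bigr => j _ do rewrite mevalX //.
rewrite (partition_big f (fun j => pb (Q (vert j x)))) /=; last first.
  by move=> i; rewrite vert_sact.
apply: eq_bigr => j hj; apply: eq_bigl => i.
rewrite vert_sact //.
case: (eqVneq (f i) j) => [->|ne]; first by rewrite hj eqxx.
by rewrite andbF; apply/esym/negbTE.
Qed.

Definition mu : ZX X := MkZX mu_compat.
End Mu.

Lemma inIn (T : eqType) (x : T) (s : list T) : x \in s -> List.In x s.
Proof. elim: s => //= a s IH; rewrite seq.in_cons => /orP [/eqP ->|/IH]; auto. Qed.

Lemma combine (A I : Type) (s : list I) (R : I -> A -> Prop) :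
  (forall i, exists L, forall a, R i a -> List.In a L) ->
  exists L, forall i, List.In i s -> forall a, R i a -> List.In a L.
Proof.
move=> H; elim: s => [|i s [L HL]]; first by exists nil.
have [Li HLi] := H i.
exists (Li ++ L)%list => j /= [<-|hj] a hR; apply List.in_or_app; auto.
right; exact: HL hj a hR.
Qed.

Lemma nondeg0 (X : sSet) (v : X 0) : Defs.nondegenerate v.
Proof. by move=> [k [y [g [hk _]]]]. Qed.

Lemma EZ (X : sSet) n (x : X n) : exists k (y : X k) (h : 'I_n.+1 -> 'I_k.+1),
  monotone h /\ Defs.nondegenerate y /\ x = sact h y.
Proof.
move: x; elim/ltn_ind: n => n IH x.
case: (classic (Defs.degenerate x)) => [[k [y [g [hk [hg ->]]]]]|nd].
  have [k' [y' [h [hh [nd' ->]]]]] := IH k hk y.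
  exists k', y', (fun i => h (g i)); split; last split => //.
    by move=> i j hij; apply: hh; apply: hg.
  by rewrite sact_comp.
exists n, x, (fun i => i); split; first by [].
split => //; by rewrite sact_id.
Qed.

Definition facesL (X : sSet) (b : {n : nat & X n}) : list {m : nat & X m} :=
  let (n, y) := b in
  List.flat_map (fun m => List.map
     (fun f : {ffun 'I_m.+1 -> 'I_n.+1} => existT (fun k => X k) m (sact (fun i => f i) y))
     (enum {ffun 'I_m.+1 -> 'I_n.+1})) (List.seq 0 n.+1).

Lemma faces_in (X : sSet) n (y : X n) m (z : X m) : Defs.nondegenerate z -> is_face z y ->
  List.In (existT (fun k => X k) m z) (@facesL X (existT (fun k => X k) n y)).
Proof.
move=> nd [f [hf ez]]; subst z.
have hm : (m <= n)%N.
  rewrite leqNgt; apply/negP => hlt; apply: nd; exists n, y, f; by repeat split.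
rewrite /facesL; apply List.in_flat_map; exists m; split.
  apply List.in_seq; split; first by apply/leP.
  apply/leP; rewrite /= ltnS; exact: hm.
apply List.in_map_iff; exists (finfun f); split.
  congr existT; congr sact; apply: functional_extensionality => i; by rewrite ffunE.
by apply: inIn; rewrite mem_enum.
Qed.
From mathcomp Require Import ring.

Theorem proposition9p7 (X : sSet) (hX : locally_finite X)
    (k : nat) (phi : 'I_k -> ZX X)
    (hphi : forall i, finite_support (phi i)) :
  exists mu : ZX X, finite_support mu /\
    forall (i : 'I_k) (n : nat) (x : X n),
      eqD (phi i n x * mu n x) (phi i n x) /\
      eqD (mu n x * phi i n x) (phi i n x).
Proof.
pose Q := fun v : X 0 => exists i : 'I_k, in_support (phi i) v.
exists (@mu X Q); split.
- have [LS HLS] : exists LS : list {m : nat & X m}, forall i, List.In i (enum 'I_k) -> forall a : {m : nat & X m},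
      (match a with existT m z => Defs.nondegenerate z /\ in_support (phi i) z end) ->
      List.In a LS.
    apply: (@combine _ _ (enum 'I_k) (fun i (a : {m : nat & X m}) =>
      match a with existT m z => Defs.nondegenerate z /\ in_support (phi i) z end)) => i.
    have [L HL] := hphi i.
    by exists L => [[m z] [nd hs]]; apply: HL.
  have [M HM] : exists M : list {m : nat & X m}, forall a : {m : nat & X m}, List.In a LS -> forall b : {m : nat & X m},
      (match a with existT m0 v => exists n (t : X n), Defs.nondegenerate t /\ is_face v t /\
         (match b with existT m z => Defs.nondegenerate z /\ is_face z t end) end) ->
      List.In b M.
    apply: (@combine _ _ LS (fun (a b : {m : nat & X m}) =>
      match a with existT m0 v => exists n (t : X n), Defs.nondegenerate t /\ is_face v t /\
         (match b with existT m z => Defs.nondegenerate z /\ is_face z t end) end)) => [[m0 v]].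
    have [L' HL'] := hX m0 v.
    exists (List.flat_map (@facesL X) L') => [[m z]] [n [t [ndt [hvt [ndz hzt]]]]].
    apply List.in_flat_map; exists (existT _ n t); split; first exact: HL'.
    exact: faces_in.
  exists M => m z ndz [n [x [hne hzx]]].
  have [j hj] : exists j : 'I_n.+1, pb (Q (vert j x)) = true.
    apply: NNPP => hno; apply: hne; exists 0; rewrite mulr0 subr0 /=.
    rewrite /mufam big_mkcond big1 // => j _; case: ifP => // hj.
    by exfalso; apply: hno; exists j.
  have [i hi] := (pbP _).1 hj.
  have ie : List.In i (enum 'I_k) by apply: inIn; rewrite mem_enum.
  have inLS := HLS i ie (existT _ 0 (vert j x)) (conj (@nondeg0 X _) hi).
  have [k' [y [h [hh [ndy ex]]]]] := @EZ X _ x.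
  apply: (HM _ inLS (existT _ m z)); exists k', y; split => //; split.
    exists (fun _ => h j); split; first exact: mono_const.
    by rewrite /vert ex sact_comp //; apply: mono_const.
  split => //.
  have [f [hf ez]] := hzx.
  exists (fun i => h (f i)); split.
    by move=> a b hab; apply: hh; apply: hf.
  by rewrite ez ex sact_comp.
- move=> i n x; rewrite /=.
  case: (classic (eqD (phi i n x) 0)) => [[r hr]|hne].
    rewrite subr0 in hr.
    by split; exists (r * @mufam X Q _ x - r); rewrite hr; ring.
  have e : @mufam X Q _ x = \sum_(j < n.+1) mvar n.+1 j.
    rewrite /mufam; apply: eq_bigl => j; apply/pbP; exists i, n, x; split => //.
    by exists (fun _ => j); split; [exact: mono_const|].
  by split; exists (phi i n x); rewrite e; ring.
Qed.
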